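(* Let $\mathcal{L}$ be a set of graphs with no sources (all of sort $\emptyset$). Then $\mathcal{L}$ is recognizable in the graph algebra $\mathbf{G}$ if and only if, for every finite set $\tau\subseteq\mathbb{S}$, $\mathcal{L}$ is recognizable in the algebra $\mathbf{G}^\tau$.
   Context: Fix a countably infinite set $\mathbb{S}$ of source labels and a finite set $\mathbb{A}$ of edge labels with arities $\ge1$. A graph of sort $\tau$ ($\tau\subseteq\mathbb{S}$ finite) is an isomorphism class of finite hypergraphs with $\mathbb{A}$-labelled edges (each edge attached to a sequence of vertices of length the arity of its label) together with an injective map from $\tau$ to the vertices ($s$-sources). The HR algebra $\mathbf{G}$ has the finite subsets of $\mathbb{S}$ as sorts, universe of sort $\tau$ the graphs of sort $\tau$, and operations: constants $\mathbf{0}_\tau$ (only sources from $\tau$), $\mathbf{a}_{(s_1,\ldots,s_{\#a})}$ (one $a$-edge attached to an $s_1$-,…, $s_{\#a}$-source); unary $\mathsf{restrict}_\tau$ (removes source labels outside $\tau$, keeping vertices; sort $\tau'\mapsto\tau\cap\tau'$); unary $\mathsf{rename}_\alpha$ for finite permutations $\alpha$ of $\mathbb{S}$ (source map $\xi\mapsto\xi\circ\alpha$, sort $\tau\mapsto\alpha^{-1}(\tau)$); binary $\parallel$ (disjoint union then fusion of sources with equal label). For finite $\tau$, $\mathbf{G}^\tau$ is the subalgebra with sorts the subsets of $\tau$, universe the graphs of sort $\subseteq\tau$, and operations $\mathbf{0}_{\tau'}$ ($\tau'\subseteq\tau$), $\mathbf{a}_{(s_1,\ldots)}$ ($s_i\in\tau$),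 $\mathsf{restrict}_{\tau'}$ ($\tau'\subseteq\tau$), $\mathsf{rename}_\alpha$ ($\alpha$ fixing every element outside $\tau$), $\parallel$. A set $L$ is recognizable in a many-sorted algebra $\mathbf{A}$ if there is a congruence on $\mathbf{A}$ (equivalence relating only elements of the same sort, compatible with all operations) with finitely many classes of each sort such that $L$ is a union of classes. *)

(* Defs.v *)
From mathcomp Require Import all_boot all_fingroup.
From mathcomp Require Import finmap.
From Stdlib Require List.

Set Implicit Arguments.
Unset Strict Implicit.
Unset Printing Implicit Defensive.

Local Open Scope fset_scope.

(* Source labels: S = nat (a countably infinite set).
   A concrete graph: vertices 0 .. nv-1; a list (multiset) of edges, each
   an edge label together with the sequence of attached vertices; a finite
   sort (set of source labels) and a source map src, meaningful on sort. *)
Record cgraph (A : Type) := CGraph {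
  nv : nat;
  edges : seq (A * seq nat);
  gsort : {fset nat};
  src : nat -> nat
}.

Section Graphs.
Variables (A : finType) (ar : A -> nat).

Definition wf (g : cgraph A) : Prop :=
  (forall s, s \in gsort g -> src g s < nv g) /\
  {in gsort g &, injective (src g)} /\
  (forall e, e \in edges g -> size e.2 = ar e.1 /\ all (fun v => v < nv g) e.2).

(* Isomorphism of concrete graphs (graphs are isomorphism classes). *)
Definition iso (g h : cgraph A) : Prop :=
  nv g = nv h /\ gsort g = gsort h /\
  exists f : nat -> nat,
    (forall v, v < nv g -> f v < nv h) /\
    {in [pred v | v < nv g] &, injective f} /\
    (forall s, s \in gsort g -> f (src g s) = src h s) /\
    perm_eq [seq (e.1, map f e.2) | e <- edges g] (edges h).

Definition restrict (tau : {fset nat}) (g : cgraph A) : cgraph A :=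
  CGraph (nv g) (edges g) (gsort g `&` tau) (src g).

(* The finite permutation of nat induced by p : {perm 'I_n} (identity
   above n).  Every finite permutation of nat is of this form. *)
Definition extperm (n : nat) (p : {perm 'I_n}) (x : nat) : nat :=
  match insub x with Some i => val (p i) | None => x end.

Definition rename (n : nat) (p : {perm 'I_n}) (g : cgraph A) : cgraph A :=
  CGraph (nv g) (edges g) [fset extperm p^-1 x | x in gsort g]
         (fun s => src g (extperm p s)).

(* Parallel composition: disjoint union, then fusion of equally labelled
   sources.  Vertices of g are kept; each vertex of h is sent either to the
   corresponding source of g (if it is a common source) or to a fresh vertex. *)
Definition par (g h : cgraph A) : cgraph A :=
  let common := enum_fset (gsort g `&` gsort h) in
  let fused v := has (fun s => src h s == v) common in
  let nonfused := [seq v <- iota 0 (nv h) | ~~ fused v] in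
  let hmap v := match [seq s <- common | src h s == v] with
                | s :: _ => src g s
                | [::] => (nv g + index v nonfused)%N
                end in
  CGraph (nv g + size nonfused)%N
         (edges g ++ [seq (e.1, map hmap e.2) | e <- edges h])
         (gsort g `|` gsort h)
         (fun s => if s \in gsort g then src g s else hmap (src h s)).

(* Recognizability in a subalgebra of G determined by:
   - sort_ok : which sorts belong to the algebra,
   - restr_ok : which restrict_tau operations are available,
   - ren_ok : which rename_alpha operations are available.
   (Constants are irrelevant for compatibility of an equivalence.)
   The elements are isomorphism classes of well-formed graphs; an
   equivalence on them is represented by an isomorphism-invariant relation
   on well-formed concrete graphs. *)
Definition recognizable_in (sort_ok : {fset nat} -> Prop)
    (restr_ok : {fset nat} -> Prop)
    (ren_ok : forall n, {perm 'I_n} -> Prop)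
    (L : cgraph A -> Prop) : Prop :=
  exists R : cgraph A -> cgraph A -> Prop,
    (forall g h, R g h -> [/\ wf g, wf h, sort_ok (gsort g) & gsort g = gsort h]) /\
    (forall g h, wf g -> wf h -> sort_ok (gsort g) -> iso g h -> R g h) /\
    (forall g h, R g h -> R h g) /\
    (forall g h k, R g h -> R h k -> R g k) /\
    (forall tau g g', restr_ok tau -> R g g' -> R (restrict tau g) (restrict tau g')) /\
    (forall n (p : {perm 'I_n}) g g', ren_ok n p -> R g g' ->
        R (rename p g) (rename p g')) /\
    (forall g g' h h', R g g' -> R h h' -> R (par g h) (par g' h')) /\
    (forall tau, sort_ok tau -> exists reps : seq (cgraph A),
        forall g, wf g -> gsort g = tau -> exists r, List.In r reps /\ R g r) /\
    (forall g h, R g h -> L g -> L h).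

Definition recognizable_G (L : cgraph A -> Prop) : Prop :=
  recognizable_in (fun _ => True) (fun _ => True) (fun _ _ => True) L.

Definition recognizable_Gtau (tau : {fset nat}) (L : cgraph A -> Prop) : Prop :=
  recognizable_in (fun sigma => sigma `<=` tau) (fun sigma => sigma `<=` tau)
    (fun n p => forall x, x \notin tau -> extperm p x = x) L.

End Graphs.

(* Main.v *)
Require Import Defs.
From mathcomp Require Import all_boot all_fingroup.
From mathcomp Require Import finmap.
From Stdlib Require List.
Import Defs.
Set Implicit Arguments. Unset Strict Implicit. Unset Printing Implicit Defensive.
Local Open Scope fset_scope.

Lemma extperm_lt n (p : {perm 'I_n}) x (Hx : x < n) :
  extperm p x = val (p (Ordinal Hx)).
Proof. by rewrite /extperm insubT. Qed.

Lemma extperm_ge n (p : {perm 'I_n}) x : n <= x -> extperm p x = x.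
Proof. by move=> Hx; rewrite /extperm insubN // -leqNgt. Qed.

Lemma extpermK n (p : {perm 'I_n}) x : extperm p (extperm (p^-1)%g x) = x.
Proof.
case: (ltnP x n) => Hx; last by rewrite !extperm_ge.
rewrite (extperm_lt _ Hx) (extperm_lt _ (ltn_ord _)).
have -> : Ordinal (ltn_ord ((p^-1)%g (Ordinal Hx))) = (p^-1)%g (Ordinal Hx) by apply: val_inj.
by rewrite permKV.
Qed.

Lemma extpermKV n (p : {perm 'I_n}) x : extperm (p^-1)%g (extperm p x) = x.
Proof. by rewrite -{2}(invgK p) extpermK. Qed.

Definition pre (f : nat -> nat) n u := find (fun v => f v == u) (iota 0 n).

Lemma pre_lt f n u : pre f n u < n -> f (pre f n u) = u.
Proof.
move=> H; have H' : pre f n u < size (iota 0 n) by rewrite size_iota.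
have := nth_find 0 (etrans (has_find _ _) H'); rewrite nth_iota //.
by move/eqP.
Qed.

Lemma pre_spec f n u v : v < n -> f v = u -> pre f n u < n.
Proof.
move=> Hv Hf; rewrite -[X in _ < X](size_iota 0 n) -has_find.
by apply/hasP; exists v; rewrite ?mem_iota ?Hf /=.
Qed.

Lemma pre_inj f n v : (forall a b, a < n -> b < n -> f a = f b -> a = b) ->
  v < n -> pre f n (f v) = v.
Proof.
move=> Hi Hv; have Hp := pre_spec Hv erefl.
by apply: Hi => //; rewrite pre_lt.
Qed.

Definition pick2 (f1 : nat -> nat) n1 (g1 : nat -> nat) f2 n2 (g2 : nat -> nat) u :=
  if pre f1 n1 u < n1 then g1 (pre f1 n1 u) else g2 (pre f2 n2 u).

Lemma pick2_1 f1 n1 g1 f2 n2 g2 v :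
  (forall a b, a < n1 -> b < n1 -> f1 a = f1 b -> a = b) ->
  v < n1 -> pick2 f1 n1 g1 f2 n2 g2 (f1 v) = g1 v.
Proof. by move=> Hi Hv; rewrite /pick2 pre_inj ?Hv. Qed.

Lemma pick2_2 f1 n1 g1 f2 n2 g2 w :
  (forall a b, a < n2 -> b < n2 -> f2 a = f2 b -> a = b) ->
  w < n2 -> (forall v, v < n1 -> f1 v = f2 w -> g1 v = g2 w) ->
  pick2 f1 n1 g1 f2 n2 g2 (f2 w) = g2 w.
Proof.
move=> Hi Hw Hc; rewrite /pick2; case: ifP => H.
  by apply: Hc => //; rewrite pre_lt.
by rewrite pre_inj.
Qed.

Lemma inj_leq (m : nat -> nat) n n' : (forall u, u < n -> m u < n') ->
  (forall a b, a < n -> b < n -> m a = m b -> a = b) -> n <= n'.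
Proof.
move=> Hr Hi.
pose F (i : 'I_n) : 'I_n' := Ordinal (Hr i (ltn_ord i)).
have : injective F by move=> i j /(congr1 val) /= /Hi E; apply: val_inj; apply: E.
by move/leq_card; rewrite !card_ord.
Qed.

Section G.
Variables (A : finType) (ar : A -> nat).
Implicit Types g h k H : cgraph A.

Definition emap (f : nat -> nat) (e : A * seq nat) := (e.1, map f e.2).

Definition Fu (g h : cgraph A) (v w : nat) :=
  exists s, [/\ s \in gsort g, s \in gsort h, v = src g s & w = src h s].

Record Core g h k (f1 f2 : nat -> nat) : Prop := {
  c_rg1 : forall v, v < nv g -> f1 v < nv k;
  c_rg2 : forall w, w < nv h -> f2 w < nv k;
  c_in1 : forall a b, a < nv g -> b < nv g -> f1 a = f1 b -> a = b;
  c_in2 : forall a b, a < nv h -> b < nv h -> f2 a = f2 b -> a = b;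
  c_sur : forall u, u < nv k ->
     (exists2 v, v < nv g & f1 v = u) \/ (exists2 w, w < nv h & f2 w = u);
  c_fu : forall v w, v < nv g -> w < nv h -> (f1 v = f2 w <-> Fu g h v w);
  c_ed : perm_eq (edges k) (map (emap f1) (edges g) ++ map (emap f2) (edges h)) }.

Definition Glue g h k := exists f1 f2, [/\ Core g h k f1 f2,
  gsort k = gsort g `|` gsort h,
  (forall s, s \in gsort g -> src k s = f1 (src g s)) &
  (forall s, s \in gsort h -> src k s = f2 (src h s))].

Definition Spec0 g h k := (exists f1 f2, Core g h k f1 f2) /\ gsort k = fset0.

Lemma wf_edges g e : wf ar g -> e \in edges g ->
  size e.2 = ar e.1 /\ all (fun v => v < nv g) e.2.
Proof. by case=> _ [_ H]; apply: H. Qed.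

Lemma wf_src g s : wf ar g -> s \in gsort g -> src g s < nv g.
Proof. by case=> H _; apply: H. Qed.

Lemma wf_inj g s s' : wf ar g -> s \in gsort g -> s' \in gsort g ->
  src g s = src g s' -> s = s'.
Proof. by case=> _ [H _]; apply: H. Qed.

Lemma core_edges g h k f1 f2 : wf ar g -> wf ar h -> Core g h k f1 f2 ->
  forall e, e \in edges k -> size e.2 = ar e.1 /\ all (fun v => v < nv k) e.2.
Proof.
move=> wg wh C e; rewrite (perm_mem (c_ed C)) mem_cat => /orP[] /mapP [e' He' ->] /=.
- have [Hs Ha] := wf_edges wg He'; rewrite size_map Hs; split=> //.
  rewrite all_map; apply/allP => v Hv /=; apply: (c_rg1 C); exact: (allP Ha).
- have [Hs Ha] := wf_edges wh He'; rewrite size_map Hs; split=> //.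
  rewrite all_map; apply/allP => v Hv /=; apply: (c_rg2 C); exact: (allP Ha).
Qed.

Lemma wf_spec0 g h k : wf ar g -> wf ar h -> Spec0 g h k -> wf ar k.
Proof.
move=> wg wh [[f1 [f2 C]] Hs]; split; [|split].
- by move=> s; rewrite Hs in_fset0.
- by move=> s s'; rewrite Hs in_fset0.
- exact: core_edges C.
Qed.

Lemma wf_glue g h k : wf ar g -> wf ar h -> Glue g h k -> wf ar k.
Proof.
move=> wg wh [f1 [f2 [C Hs H1 H2]]]; split; [|split].
- move=> s; rewrite Hs in_fsetU => /orP[] Hin.
  + by rewrite H1 // (c_rg1 C) // wf_src.
  + by rewrite H2 // (c_rg2 C) // wf_src.
- move=> s s'; rewrite Hs !in_fsetU => /orP[] Hin /orP[] Hin' E.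
  + apply: (wf_inj wg Hin Hin'); apply: (c_in1 C); rewrite ?wf_src //.
    by rewrite -(H1 s Hin) -(H1 s' Hin').
  + have : f1 (src g s) = f2 (src h s') by rewrite -(H1 s Hin) -(H2 s' Hin').
    move/(c_fu C (wf_src wg Hin) (wf_src wh Hin')) => [t [t1 t2 e1 e2]].
    by rewrite (wf_inj wg Hin t1 e1) (wf_inj wh Hin' t2 e2).
  + have : f1 (src g s') = f2 (src h s) by rewrite -(H1 s' Hin') -(H2 s Hin).
    move/(c_fu C (wf_src wg Hin') (wf_src wh Hin)) => [t [t1 t2 e1 e2]].
    by rewrite (wf_inj wg Hin' t1 e1) (wf_inj wh Hin t2 e2).
  + apply: (wf_inj wh Hin Hin'); apply: (c_in2 C); rewrite ?wf_src //.
    by rewrite -(H2 s Hin) -(H2 s' Hin').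
- exact: core_edges C.
Qed.

Lemma map_emap_comp (m f f' : nat -> nat) n (l : seq (A * seq nat)) :
  (forall e, e \in l -> all (fun v => v < n) e.2) ->
  (forall v, v < n -> m (f v) = f' v) ->
  map (emap m) (map (emap f) l) = map (emap f') l.
Proof.
move=> H1 H2; rewrite -map_comp; apply/eq_in_map => e He /=.
rewrite /emap /= -map_comp; congr (_, _); apply/eq_in_map => v Hv /=.
by apply: H2; exact: (allP (H1 e He)).
Qed.

Lemma core_map g h k k' f1 f2 f1' f2' : Core g h k f1 f2 -> Core g h k' f1' f2' ->
  exists m, (forall v, v < nv g -> m (f1 v) = f1' v) /\
            (forall w, w < nv h -> m (f2 w) = f2' w).
Proof.
move=> C C'; exists (pick2 f1 (nv g) f1' f2 (nv h) f2'); split.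
  by move=> v Hv; rewrite pick2_1 //; apply: (c_in1 C).
move=> w Hw; rewrite pick2_2 //; first by apply: (c_in2 C).
by move=> v Hv /(c_fu C Hv Hw) /(c_fu C' Hv Hw).
Qed.

Lemma core_uniq g h k k' f1 f2 f1' f2' : wf ar g -> wf ar h ->
  Core g h k f1 f2 -> Core g h k' f1' f2' ->
  exists m, [/\ forall u, u < nv k -> m u < nv k',
    forall a b, a < nv k -> b < nv k -> m a = m b -> a = b &
    perm_eq (map (emap m) (edges k)) (edges k')].
Proof.
move=> wg wh C C'; have [m [M1 M2]] := core_map C C'; exists m; split.
- move=> u /(c_sur C) [[v Hv <-]|[w Hw <-]]; rewrite ?M1 ?M2 //.
  + exact: (c_rg1 C').
  + exact: (c_rg2 C').
- move=> a b /(c_sur C) [[v Hv <-]|[w Hw <-]] /(c_sur C) [[v' Hv' <-]|[w' Hw' <-]];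
    rewrite ?M1 ?M2 //.
  + by move/(c_in1 C') => -> .
  + by move/(c_fu C' Hv Hw') /(c_fu C Hv Hw').
  + by move/esym/(c_fu C' Hv' Hw) /(c_fu C Hv' Hw) ->.
  + by move/(c_in2 C') => -> .
- rewrite perm_sym (permPl (c_ed C')).
  rewrite -(@map_emap_comp m f1 f1' (nv g)) //; last first.
    by move=> e He; case: (wf_edges wg He).
  rewrite -(@map_emap_comp m f2 f2' (nv h)) //; last first.
    by move=> e He; case: (wf_edges wh He).
  by rewrite -map_cat perm_map // perm_sym (c_ed C).
Qed.

Lemma spec0_uniq g h k k' : wf ar g -> wf ar h -> Spec0 g h k -> Spec0 g h k' -> iso k k'.
Proof.
move=> wg wh [[f1 [f2 C]] S] [[f1' [f2' C']] S'].
have [m [R1 I1 E1]] := core_uniq wg wh C C'.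
have [m' [R2 I2 _]] := core_uniq wg wh C' C.
have En : nv k = nv k'.
  by apply/eqP; rewrite eqn_leq (inj_leq R1 I1) (inj_leq R2 I2).
split=> //; split; first by rewrite S S'.
exists m; split; first exact: R1.
split; first by move=> a b; rewrite !inE; apply: I1.
split; first by move=> s; rewrite S in_fset0.
exact: E1.
Qed.

Lemma emap_comp (m f : nat -> nat) (l : seq (A * seq nat)) :
  map (emap m) (map (emap f) l) = map (emap (m \o f)) l.
Proof.
rewrite -map_comp; apply/eq_in_map => e _ /=; by rewrite /emap /= -map_comp.
Qed.

Lemma inj_onto (f : nat -> nat) n : (forall u, u < n -> f u < n) ->
  (forall a b, a < n -> b < n -> f a = f b -> a = b) ->
  forall y, y < n -> exists2 x, x < n & f x = y.
Proof.
move=> Hr Hi y Hy.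
pose F (i : 'I_n) : 'I_n := Ordinal (Hr i (ltn_ord i)).
have Fi : injective F by move=> i j /(congr1 val) /= /Hi E; apply: val_inj; apply: E.
have [G _ GF] := injF_bij Fi.
exists (val (G (Ordinal Hy))); first exact: ltn_ord.
by have := congr1 val (GF (Ordinal Hy)).
Qed.

Lemma spec0_iso g g' h k : wf ar g -> iso g g' -> Spec0 g' h k -> Spec0 g h k.
Proof.
move=> wg [En [Es [f [Fr [Fi [Fs Fe]]]]]] [[f1 [f2 C]] S]; split=> //.
have Fi' : forall a b, a < nv g -> b < nv g -> f a = f b -> a = b.
  by move=> a b Ha Hb; apply: Fi; rewrite inE.
exists (f1 \o f), f2; split.
- by move=> v Hv /=; apply: (c_rg1 C); apply: Fr.
- exact: (c_rg2 C).
- move=> a b Ha Hb /= /(c_in1 C (Fr _ Ha) (Fr _ Hb)); exact: Fi'.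
- exact: (c_in2 C).
- move=> u /(c_sur C) [[v' Hv' <-]|[w Hw <-]]; last by right; exists w.
  have Fr' : forall v, v < nv g -> f v < nv g by move=> v /Fr; rewrite En.
  left; rewrite -En in Hv'; have [v Hv Ev] := inj_onto Fr' Fi' Hv'.
  by exists v => //=; rewrite Ev.
- move=> v w Hv Hw /=; rewrite (c_fu C (Fr _ Hv) Hw); split.
  + move=> [s [s1 s2 e1 e2]]; rewrite -Es in s1; exists s; split=> //.
    apply: Fi'; rewrite ?wf_src //; by rewrite Fs.
  + move=> [s [s1 s2 e1 e2]]; exists s; split=> //; first by rewrite -Es.
    by rewrite e1 Fs.
- apply: (perm_trans (c_ed C)); rewrite perm_cat2r -emap_comp.
  by apply: perm_map; rewrite perm_sym.
Qed.

Lemma spec0_fu g g' h h' k : nv g = nv g' -> edges g = edges g' ->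
  nv h = nv h' -> edges h = edges h' ->
  (forall v w, v < nv g -> w < nv h -> (Fu g h v w <-> Fu g' h' v w)) ->
  Spec0 g h k -> Spec0 g' h' k.
Proof.
move=> En Ee Hn He HF [[f1 [f2 C]] S]; split=> //; exists f1, f2; split.
- by rewrite -En; apply: (c_rg1 C).
- by rewrite -Hn; apply: (c_rg2 C).
- by rewrite -En; apply: (c_in1 C).
- by rewrite -Hn; apply: (c_in2 C).
- by rewrite -En -Hn; apply: (c_sur C).
- by rewrite -En -Hn => v w Hv Hw; rewrite -HF //; apply: (c_fu C).
- by rewrite -Ee -He; apply: (c_ed C).
Qed.

Lemma Fu_restrict tau x H v w :
  Fu (restrict tau x) H v w <-> Fu x (restrict tau H) v w.
Proof.
split=> [[s [s1 s2 e1 e2]]|[s [s1 s2 e1 e2]]]; exists s; move: s1 s2;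
  rewrite /= !in_fsetI => /=.
- by case/andP=> -> -> ->.
- by move=> -> /andP[-> ->].
Qed.

Lemma Fu_own x H v w : Fu x H v w <-> Fu x (restrict (gsort x) H) v w.
Proof.
split=> [[s [s1 s2 e1 e2]]|[s [s1 s2 e1 e2]]]; exists s; move: s1 s2;
  rewrite /= ?in_fsetI => /=.
- by move=> -> ->.
- by move=> -> /andP[-> _].
Qed.

Lemma Fu_rename n (p : {perm 'I_n}) x H v w :
  Fu (rename p x) H v w <-> Fu x (rename (p^-1)%g H) v w.
Proof.
split.
- move=> [s [/= /imfsetP [y /= Hy Es] s2 e1 e2]].
  exists (extperm p s); split=> /=.
  + by rewrite Es extpermK.
  + by apply/imfsetP; exists s => //=; rewrite invgK.
  + exact: e1.
  + by rewrite extpermKV.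
- move=> [t [t1 /= /imfsetP [y /= Hy Et] e1 e2]].
  rewrite invgK in Et.
  exists (extperm (p^-1)%g t); split=> /=.
  + by apply/imfsetP; exists t.
  + by rewrite Et extpermKV.
  + by rewrite extpermK.
  + exact: e2.
Qed.

Lemma Fu_sym g h v w : Fu g h v w <-> Fu h g w v.
Proof. by split=> [[s [s1 s2 e1 e2]]|[s [s1 s2 e1 e2]]]; exists s; split. Qed.

Lemma glue_sym g h k : Glue g h k -> Glue h g k.
Proof.
move=> [f1 [f2 [C S H1 H2]]]; exists f2, f1; split=> //; last by rewrite S fsetUC.
split.
- exact: (c_rg2 C).
- exact: (c_rg1 C).
- exact: (c_in2 C).
- exact: (c_in1 C).
- by move=> u /(c_sur C) [?|?]; [right|left].
- by move=> v w Hv Hw; rewrite Fu_sym -(c_fu C Hw Hv); split=> ->.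
- by apply: (perm_trans (c_ed C)); apply: permEl; apply: perm_catC.
Qed.

Lemma spec0_of_glue g h k : Glue g h k -> Spec0 g h (restrict fset0 k).
Proof.
by move=> [f1 [f2 [C _ _ _]]]; split; [exists f1, f2; by case: C => r1 r2 i1 i2 su fu ed; split | rewrite /= fsetI0].
Qed.

Definition pcommon g h := enum_fset (gsort g `&` gsort h).
Definition pfused g h v := has (fun s => src h s == v) (pcommon g h).
Definition pnon g h := [seq v <- iota 0 (nv h) | ~~ pfused g h v].
Definition phmap g h v := match [seq s <- pcommon g h | src h s == v] with
                | s :: _ => src g s
                | [::] => (nv g + index v (pnon g h))%N
                end.

Lemma par_eq g h : par g h = CGraph (nv g + size (pnon g h))%N
   (edges g ++ map (emap (phmap g h)) (edges h)) (gsort g `|` gsort h)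
   (fun s => if s \in gsort g then src g s else phmap g h (src h s)).
Proof. by []. Qed.

Lemma mem_pcommon g h s : (s \in pcommon g h) = (s \in gsort g `&` gsort h).
Proof. by []. Qed.

Lemma phmap_fused g h s : wf ar h -> s \in gsort g -> s \in gsort h ->
  phmap g h (src h s) = src g s.
Proof.
move=> wh sg sh; rewrite /phmap.
have Hs : s \in [seq x <- pcommon g h | src h x == src h s].
  by rewrite mem_filter eqxx mem_pcommon in_fsetI sg sh.
case E: [seq _ <- _ | _] Hs => [|s' l] //.
have : s' \in [seq x <- pcommon g h | src h x == src h s] by rewrite E mem_head.
rewrite mem_filter mem_pcommon in_fsetI => /andP [/eqP Es /andP [_ s'h]] _.
by rewrite (wf_inj wh s'h sh Es).
Qed.

Lemma phmap_non g h w : ~~ pfused g h w -> phmap g h w = (nv g + index w (pnon g h))%N.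
Proof.
move=> Hn; rewrite /phmap.
have : [seq s <- pcommon g h | src h s == w] = [::].
  by apply/eqP; move: Hn; rewrite /pfused has_filter negbK.
by move=> ->.
Qed.

Lemma pfusedP g h w : reflect (exists s, [/\ s \in gsort g, s \in gsort h & src h s = w])
  (pfused g h w).
Proof.
apply: (iffP hasP).
- by move=> [s]; rewrite mem_pcommon in_fsetI => /andP [s1 s2] /eqP; exists s.
- by move=> [s [s1 s2 e]]; exists s; rewrite ?mem_pcommon ?in_fsetI ?s1 ?s2 ?e.
Qed.

Lemma mem_pnon g h w : (w \in pnon g h) = (w < nv h) && ~~ pfused g h w.
Proof. by rewrite mem_filter mem_iota add0n andbC. Qed.

Lemma par_glue g h : wf ar g -> wf ar h -> Glue g h (par g h).
Proof.
move=> wg wh; rewrite par_eq; exists id, (phmap g h).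
have Hlt : forall w, w < nv h -> phmap g h w < nv g + size (pnon g h).
  move=> w Hw; case: (pfusedP g h w) => [[s [s1 s2 <-]]|Hn].
  + by rewrite phmap_fused // ltn_addr // wf_src.
  + rewrite phmap_non; last by apply/pfusedP.
    by rewrite ltn_add2l index_mem mem_pnon Hw /=; apply/pfusedP.
have Hfu : forall v w, v < nv g -> w < nv h -> (v = phmap g h w <-> Fu g h v w).
  move=> v w Hv Hw; split.
  + case: (pfusedP g h w) => [[s [s1 s2 Es]]|Hn].
    * by rewrite -Es phmap_fused // => ->; exists s.
    * rewrite phmap_non; last by apply/pfusedP.
      by move=> E; move: Hv; rewrite E ltnNge leq_addr.
  + by move=> [s [s1 s2 -> ->]]; rewrite phmap_fused.
split; [split| | |].
- by move=> v Hv /=; rewrite ltn_addr.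
- exact: Hlt.
- by [].
- move=> a b Ha Hb.
  case: (pfusedP g h a) => [[s [s1 s2 Ea]]|Hna];
  case: (pfusedP g h b) => [[s' [s1' s2' Eb]]|Hnb].
  + rewrite -Ea -Eb !phmap_fused // => E.
    by rewrite (wf_inj wg s1 s1' E).
  + rewrite -Ea phmap_fused // phmap_non; last by apply/pfusedP.
    by move=> E; have := wf_src wg s1; rewrite E ltnNge leq_addr.
  + rewrite -Eb phmap_fused // phmap_non; last by apply/pfusedP.
    by move=> E; have := wf_src wg s1'; rewrite -E ltnNge leq_addr.
  + rewrite !phmap_non; try by apply/pfusedP.
    move/addnI => E.
    have Ha' : a \in pnon g h by rewrite mem_pnon Ha; apply/pfusedP.
    have Hb' : b \in pnon g h by rewrite mem_pnon Hb; apply/pfusedP.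
    by rewrite -(nth_index 0 Ha') E nth_index.
- move=> u Hu; case: (ltnP u (nv g)) => Hug; first by left; exists u.
  right; have Hi : u - nv g < size (pnon g h) by rewrite ltn_subLR.
  have Hm := mem_nth 0 Hi; move: (Hm); rewrite mem_pnon => /andP [Hw Hn].
  exists (nth 0 (pnon g h) (u - nv g)) => //.
  rewrite phmap_non // index_uniq ?subnKC //.
  by rewrite filter_uniq // iota_uniq.
- by move=> v w Hv Hw; apply: Hfu.
- have -> : map (emap id) (edges g) = edges g.
    by rewrite -[RHS]map_id; apply/eq_in_map => -[a l] _; rewrite /emap /= map_id.
  by [].
- by [].
- by move=> s sg /=; rewrite sg.
- move=> s sh /=; case: ifP => sg //.
  by rewrite phmap_fused.
Qed.

Lemma spec0_assoc a b ab H k bH : wf ar a -> wf ar b -> wf ar H ->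
  Glue a b ab -> Spec0 ab H k -> Glue b H bH -> Spec0 a bH k.
Proof.
move=> wa wb wH Gab [[F1 [F2 D]] Sk] GbH.
have wab := wf_glue wa wb Gab.
case: Gab => [f1 [f2 [C Sab S1 S2]]]; case: GbH => [e1 [e2 [E SbH T1 T2]]].
split=> //.
have HabH : forall s, s \in gsort ab -> s \in gsort H -> F1 (src ab s) = F2 (src H s).
  move=> s s1 s2; apply/(c_fu D (wf_src wab s1) (wf_src wH s2)); by exists s.
have Hcross : forall i w, i < nv b -> w < nv H -> F1 (f2 i) = F2 w -> e1 i = e2 w.
  move=> i w Hi Hw /(c_fu D (c_rg2 C Hi) Hw) [s [s1 s2 Es Ew]].
  case: (boolP (s \in gsort b)) => sb.
  + rewrite S2 // in Es; have Ei := c_in2 C Hi (wf_src wb sb) Es.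
    by apply/(c_fu E Hi Hw); exists s.
  + have sa : s \in gsort a by move: s1; rewrite Sab in_fsetU (negPf sb) orbF.
    rewrite S1 // in Es.
    have [t [t1 t2 e e']] := proj1 (c_fu C (wf_src wa sa) Hi) (esym Es).
    by move: sb; rewrite (wf_inj wa sa t1 e) t2.
pose phi2 := pick2 e1 (nv b) (F1 \o f2) e2 (nv H) F2.
have P1 : forall i, i < nv b -> phi2 (e1 i) = F1 (f2 i).
  by move=> i Hi; rewrite /phi2 pick2_1 //; apply: (c_in1 E).
have P2 : forall w, w < nv H -> phi2 (e2 w) = F2 w.
  move=> w Hw; rewrite /phi2 pick2_2 //; first by apply: (c_in2 E).
  move=> i Hi /(c_fu E Hi Hw) [s [s1 s2 -> ->]] /=.
  rewrite -S2 //; apply: HabH => //; by rewrite Sab in_fsetU s1 orbT.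
clearbody phi2.
exists (F1 \o f1), phi2; split.
- by move=> v Hv /=; apply: (c_rg1 D); apply: (c_rg1 C).
- move=> u /(c_sur E) [[i Hi <-]|[w Hw <-]].
  + by rewrite P1 //; apply: (c_rg1 D); apply: (c_rg2 C).
  + by rewrite P2 //; apply: (c_rg2 D).
- move=> x y Hx Hy /= /(c_in1 D (c_rg1 C Hx) (c_rg1 C Hy)); exact: (c_in1 C).
- move=> x y /(c_sur E) [[i Hi <-]|[w Hw <-]] /(c_sur E) [[i' Hi' <-]|[w' Hw' <-]];
    rewrite ?P1 ?P2 //.
  + by move/(c_in1 D (c_rg2 C Hi) (c_rg2 C Hi')) /(c_in2 C Hi Hi') ->.
  + exact: Hcross.
  + by move/esym/(Hcross _ _ Hi' Hw) ->.
  + by move/(c_in2 D Hw Hw') ->.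
- move=> u /(c_sur D) [[x Hx <-]|[w Hw <-]].
  + case: (c_sur C Hx) => [[v Hv <-]|[i Hi <-]]; first by left; exists v.
    by right; exists (e1 i); [apply: (c_rg1 E) | rewrite P1].
  + by right; exists (e2 w); [apply: (c_rg2 E) | rewrite P2].
- move=> v u Hv Hu /=; split.
  + case: (c_sur E Hu) => [[i Hi <-]|[w Hw <-]]; rewrite ?P1 ?P2 //.
    * move/(c_in1 D (c_rg1 C Hv) (c_rg2 C Hi)) /(c_fu C Hv Hi) => [s [s1 s2 -> ->]].
      exists s; split=> //; last by rewrite T1.
      by rewrite SbH in_fsetU s2.
    * move/(c_fu D (c_rg1 C Hv) Hw) => [s [s1 s2 Es ->]].
      case: (boolP (s \in gsort a)) => sa.
      -- rewrite S1 // in Es; have -> := c_in1 C Hv (wf_src wa sa) Es.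
         exists s; split=> //; last by rewrite T2.
         by rewrite SbH in_fsetU s2 orbT.
      -- have sb : s \in gsort b by move: s1; rewrite Sab in_fsetU (negPf sa).
         rewrite S2 // in Es.
         have [t [t1 t2 e e']] := proj1 (c_fu C Hv (wf_src wb sb)) Es.
         by move: sa; rewrite (wf_inj wb sb t2 e') t1.
  + move=> [s [sa sbH -> ->]].
    have sab : s \in gsort ab by rewrite Sab in_fsetU sa.
    rewrite /= -S1 //.
    case: (boolP (s \in gsort b)) => sb.
    * by rewrite T1 // P1 ?wf_src // /= -S2.
    * have sH : s \in gsort H by move: sbH; rewrite SbH in_fsetU (negPf sb).
      by rewrite T2 // P2 ?wf_src // HabH.
- apply: (perm_trans (c_ed D)).
  have h1 : perm_eq (map (emap F1) (edges ab))
      (map (emap (F1 \o f1)) (edges a) ++ map (emap (F1 \o f2)) (edges b)).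
    rewrite -(emap_comp F1 f1) -(emap_comp F1 f2) -map_cat.
    by apply: perm_map (c_ed C).
  have h2 : perm_eq (map (emap phi2) (edges bH))
      (map (emap (F1 \o f2)) (edges b) ++ map (emap F2) (edges H)).
    rewrite -(@map_emap_comp phi2 e1 (F1 \o f2) (nv b)) //; last first.
      by move=> e He; case: (wf_edges wb He).
    rewrite -(@map_emap_comp phi2 e2 F2 (nv H)) //; last first.
      by move=> e He; case: (wf_edges wH He).
    by rewrite -map_cat; apply: perm_map (c_ed E).
  apply: (perm_trans (perm_cat h1 (perm_refl _))).
  by rewrite -catA perm_cat2l perm_sym.
Qed.
End G.

Section Main.
Variables (A : finType) (ar : A -> nat).
Implicit Types g h k H : cgraph A.

Definition P g H := restrict fset0 (par g H).

Lemma wf_restrict g tau : wf ar g -> wf ar (restrict tau g).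
Proof.
move=> wg; split; [|split].
- by move=> s /=; rewrite in_fsetI => /andP [s1 _]; exact: wf_src wg s1.
- by move=> s s' /=; rewrite !in_fsetI => /andP [s1 _] /andP [s2 _]; exact: wf_inj wg s1 s2.
- by move=> e He; exact: wf_edges wg He.
Qed.

Lemma wf_rename g n (p : {perm 'I_n}) : wf ar g -> wf ar (rename p g).
Proof.
move=> wg; split; [|split].
- move=> s /= /imfsetP [y /= Hy ->]; rewrite extpermK; exact: wf_src wg Hy.
- move=> s s' /= /imfsetP [y /= Hy ->] /imfsetP [y' /= Hy' ->].
  by rewrite !extpermK => E; rewrite (wf_inj wg Hy Hy' E).
- by move=> e He; exact: wf_edges wg He.
Qed.

Lemma wf_par g h : wf ar g -> wf ar h -> wf ar (par g h).
Proof. by move=> wg wh; apply: wf_glue wg wh (par_glue wg wh). Qed.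

Lemma P_spec g H : wf ar g -> wf ar H -> Spec0 g H (P g H).
Proof. by move=> wg wH; exact: spec0_of_glue (par_glue wg wH). Qed.

Lemma wf_P g H : wf ar g -> wf ar H -> wf ar (P g H).
Proof. by move=> wg wH; apply: wf_spec0 wg wH (P_spec wg wH). Qed.

Lemma iso_refl g : iso g g.
Proof.
split=> //; split=> //; exists id; split=> //; split=> //; split=> //.
have -> : [seq (e.1, [seq id i | i <- e.2]) | e <- edges g] = edges g.
  by rewrite -[RHS]map_id; apply/eq_in_map => -[a l] _ /=; rewrite map_id.
by [].
Qed.

Definition H0 : cgraph A := CGraph 0 [::] fset0 id.

Lemma wf_H0 : wf ar H0.
Proof. by split; [|split] => //= s; rewrite in_fset0. Qed.

Lemma spec0_self g : wf ar g -> gsort g = fset0 -> Spec0 g H0 g.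
Proof.
move=> wg S; split=> //; exists id, id; split=> //.
- by move=> u Hu; left; exists u.
- have -> : map (emap id) (edges g) = edges g.
    by rewrite -[RHS]map_id; apply/eq_in_map => -[a l] _; rewrite /emap /= map_id.
  by rewrite /= cats0.
Qed.

Variable L : cgraph A -> Prop.

Lemma Lequiv (L_iso : forall g h, wf ar g -> wf ar h -> iso g h -> L g -> L h)
  g h k k' : wf ar g -> wf ar h -> Spec0 g h k -> Spec0 g h k' -> (L k <-> L k').
Proof.
move=> wg wh S S'; have wk := wf_spec0 wg wh S; have wk' := wf_spec0 wg wh S'.
split; apply: L_iso => //; [exact: spec0_uniq wg wh S S' | exact: spec0_uniq wg wh S' S].
Qed.

End Main.

Theorem theorem7p4 (A : finType) (ar : A -> nat)
  (ar_pos : forall a, 0 < ar a)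
  (L : cgraph A -> Prop)
  (L_sourceless : forall g, L g -> wf ar g /\ gsort g = fset0)
  (L_iso : forall g h, wf ar g -> wf ar h -> iso g h -> L g -> L h) :
  recognizable_G ar L <-> (forall tau : {fset nat}, recognizable_Gtau ar tau L).
Proof.
have LE := Lequiv L_iso.
split.
- move=> [R [R1 [R2 [R3 [R4 [R5 [R6 [R7 [R8 R9]]]]]]]]] tau.
  exists (fun g h => R g h /\ gsort g `<=` tau).
  split; [|split; [|split; [|split; [|split; [|split; [|split; [|split]]]]]]].
  + by move=> g h [/R1 [wg wh _ E] Hs]; split.
  + by move=> g h wg wh Hs Hi; split=> //; apply: R2.
  + move=> g h [Hr Hs]; split; first exact: R3.
    by case: (R1 _ _ Hr) => _ _ _ <-.
  + by move=> g h k [Hr Hs] [Hr' _]; split=> //; apply: R4 Hr Hr'.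
  + move=> t g g' Ht [Hr Hs]; split; first exact: R5.
    by apply: fsubset_trans (fsubsetIr _ _) Ht.
  + move=> n p g g' Hp [Hr Hs]; split; first exact: R6.
    apply/fsubsetP => s /imfsetP [y /= Hy ->].
    have Ht : y \in tau by apply: (fsubsetP Hs).
    case: (boolP (extperm (p^-1)%g y \in tau)) => // Hn.
    by have := Hp _ Hn; rewrite extpermK => E; rewrite -E Ht in Hn.
  + move=> g g' h h' [Hr Hs] [Hr' Hs']; split; first exact: R7.
    by rewrite /= fsubUset Hs Hs'.
  + move=> s Hs; have [reps Hreps] := R8 s I; exists reps => g wg Eg.
    have [r [Hin Hr]] := Hreps g wg Eg; exists r; split=> //; split=> //.
    by rewrite Eg.
  + by move=> g h [Hr _]; apply: R9.
- move=> Hrec.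
  exists (fun g h => [/\ wf ar g, wf ar h, gsort g = gsort h &
            forall H, wf ar H -> (L (P g H) <-> L (P h H))]).
  have LPr : forall g H t, wf ar g -> wf ar H ->
      (L (P (restrict t g) H) <-> L (P g (restrict t H))).
    move=> g H t wg wH; apply: (LE g (restrict t H)) => //.
    + exact: wf_restrict t wH.
    + apply: spec0_fu (P_spec (wf_restrict t wg) wH) => // v w _ _.
      exact: Fu_restrict.
    + exact: P_spec wg (wf_restrict t wH).
  have LPn : forall g H n (p : {perm 'I_n}), wf ar g -> wf ar H ->
      (L (P (rename p g) H) <-> L (P g (rename (p^-1)%g H))).
    move=> g H n p wg wH; apply: (LE g (rename (p^-1)%g H)) => //.
    + exact: wf_rename (p^-1)%g wH.
    + apply: spec0_fu (P_spec (wf_rename p wg) wH) => // v w _ _.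
      exact: Fu_rename.
    + exact: P_spec wg (wf_rename (p^-1)%g wH).
  have LPa : forall a b H, wf ar a -> wf ar b -> wf ar H ->
      (L (P (par a b) H) <-> L (P a (par b H))).
    move=> a b H wa wb wH; apply: (LE a (par b H)) => //.
    + exact: wf_par wb wH.
    + apply: spec0_assoc wa wb wH (par_glue wa wb) (P_spec (wf_par wa wb) wH)
        (par_glue wb wH).
    + exact: P_spec wa (wf_par wb wH).
  have LPs : forall a b H, wf ar a -> wf ar b -> wf ar H ->
      (L (P (par a b) H) <-> L (P b (par a H))).
    move=> a b H wa wb wH; apply: (LE b (par a H)) => //.
    + exact: wf_par wa wH.
    + apply: spec0_assoc wb wa wH (glue_sym (par_glue wa wb))
        (P_spec (wf_par wa wb) wH) (par_glue wa wH).
    + exact: P_spec wb (wf_par wa wH).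
  have LPo : forall g H, wf ar g -> wf ar H ->
      (L (P g H) <-> L (P g (restrict (gsort g) H))).
    move=> g H wg wH; apply: (LE g (restrict (gsort g) H)) => //.
    + exact: wf_restrict (gsort g) wH.
    + apply: spec0_fu (P_spec wg wH) => // v w _ _.
      exact: Fu_own.
    + exact: P_spec wg (wf_restrict (gsort g) wH).
  split; [|split; [|split; [|split; [|split; [|split; [|split; [|split]]]]]]].
  + by move=> g h [wg wh E _].
  + move=> g h wg wh _ Hi; split=> //; first by case: Hi => _ [].
    move=> H wH; apply: (LE g H) => //; first exact: P_spec wg wH.
    exact: spec0_iso wg Hi (P_spec wh wH).
  + move=> g h [wg wh E HL]; split=> // H wH; exact: iff_sym (HL H wH).
  + move=> g h k [wg wh E HL] [_ wk E' HL']; split=> //; first by rewrite E.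
    by move=> H wH; apply: iff_trans (HL H wH) (HL' H wH).
  + move=> t g g' _ [wg wg' E HL]; split.
    * exact: wf_restrict t wg.
    * exact: wf_restrict t wg'.
    * by rewrite /= E.
    * move=> H wH; apply: iff_trans (LPr g H t wg wH) _.
      apply: iff_trans (HL _ (wf_restrict t wH)) _.
      exact: iff_sym (LPr g' H t wg' wH).
  + move=> n p g g' _ [wg wg' E HL]; split.
    * exact: wf_rename p wg.
    * exact: wf_rename p wg'.
    * by rewrite /= E.
    * move=> H wH; apply: iff_trans (LPn g H n p wg wH) _.
      apply: iff_trans (HL _ (wf_rename (p^-1)%g wH)) _.
      exact: iff_sym (LPn g' H n p wg' wH).
  + move=> g g' h h' [wg wg' E HL] [wh wh' E' HL']; split.
    * exact: wf_par wg wh.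
    * exact: wf_par wg' wh'.
    * by rewrite /= E E'.
    * move=> H wH.
      apply: iff_trans (LPa g h H wg wh wH) _.
      apply: iff_trans (HL _ (wf_par wh wH)) _.
      apply: iff_trans (iff_sym (LPa g' h H wg' wh wH)) _.
      apply: iff_trans (LPs g' h H wg' wh wH) _.
      apply: iff_trans (HL' _ (wf_par wg' wH)) _.
      exact: iff_sym (LPs g' h' H wg' wh' wH).
  + move=> t _.
    have [Rt [R1 [R2 [R3 [R4 [R5 [R6 [R7 [R8 R9]]]]]]]]] := Hrec t.
    have [reps Hreps] := R8 t (fsubset_refl t).
    exists reps => g wg Eg; have [r [Hin Hr]] := Hreps g wg Eg.
    exists r; split=> //; have [_ wr _ Er] := R1 _ _ Hr.
    split=> // H wH.
    have wH' : wf ar (restrict t H) by exact: wf_restrict t wH.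
    apply: iff_trans (LPo g H wg wH) _.
    apply: iff_trans _ (iff_sym (LPo r H wr wH)).
    rewrite -Er Eg.
    have HR : Rt (P g (restrict t H)) (P r (restrict t H)).
      apply: R5; first exact: fsub0set.
      apply: R7 => //; apply: R2 => //; first exact: fsubsetIr.
      exact: iso_refl.
    split; apply: R9; [exact: HR | exact: R3].
  + move=> g h [wg wh E HL] Lg.
    have [_ Sg] := L_sourceless g Lg.
    have Sh : gsort h = fset0 by rewrite -E.
    have w0 : wf ar (H0 A) by exact: wf_H0.
    have HL0 := HL _ w0.
    have := proj1 (LE _ _ _ _ wg w0 (spec0_self wg Sg) (P_spec wg w0)) Lg.
    move/(proj1 HL0).
    exact: proj1 (LE _ _ _ _ wh w0 (P_spec wh w0) (spec0_self wh Sh)).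
Qed.
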